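(* Let $C$ be a convex chain with endpoints $p$ and $q$. If $C$ is contained in $D(p,q)$, then the stretch factor of $C$ is at most $\frac{\pi}{2}$.
   Context: A chain is a sequence of points $p=c_1,\dots,c_m=q$ together with the segments $c_ic_{i+1}$; it is convex if the polygon $c_1c_2\cdots c_m$ is convex (the points are in convex position and appear in this cyclic order on their convex hull). $D(p,q)$ is the closed disk having the segment $pq$ as a diameter. The stretch factor of the chain is the smallest $t$ such that for any two vertices $u,v$ of $C$, the length of the sub-chain of $C$ between $u$ and $v$ is at most $t|uv|$. *)

(* Defs.v *)
From Stdlib Require Import Reals Lra.
Open Scope R_scope.

Definition point := (R * R)%type.

Definition dist (a b : point) : R :=
  sqrt ((fst a - fst b) ^ 2 + (snd a - snd b) ^ 2).

Definition orient (a b c : point) : R :=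
  (fst b - fst a) * (snd c - snd a) - (snd b - snd a) * (fst c - fst a).

(* A chain with m vertices c 0, ..., c (m-1); p = c 0, q = c (m-1). *)

(* Convex chain: the polygon c 0 c 1 ... c (m-1) is convex, i.e. the points
   are in convex position and appear in this cyclic order on their hull:
   every triple taken in sequence order has the same (strict) orientation. *)
Definition convex_chain (c : nat -> point) (m : nat) : Prop :=
  (forall i j k, (i < j)%nat -> (j < k)%nat -> (k < m)%nat ->
     0 < orient (c i) (c j) (c k)) \/
  (forall i j k, (i < j)%nat -> (j < k)%nat -> (k < m)%nat ->
     orient (c i) (c j) (c k) < 0).

Definition seg_point (a b : point) (t : R) : point :=
  ((1 - t) * fst a + t * fst b, (1 - t) * snd a + t * snd b).

Definition in_diam_disk (p q x : point) : Prop :=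
  dist x ((fst p + fst q) / 2, (snd p + snd q) / 2) <= dist p q / 2.

Definition chain_in_diam_disk (c : nat -> point) (m : nat) : Prop :=
  forall i t, (S i < m)%nat -> 0 <= t <= 1 ->
    in_diam_disk (c 0%nat) (c (m - 1)%nat) (seg_point (c i) (c (S i)) t).

Fixpoint subchain_length (c : nat -> point) (i n : nat) : R :=
  match n with
  | O => 0
  | S n' => dist (c i) (c (S i)) + subchain_length c (S i) n'
  end.

Definition stretch_at_most (c : nat -> point) (m : nat) (t : R) : Prop :=
  forall i j, (i <= j)%nat -> (j < m)%nat ->
    subchain_length c i (j - i) <= t * dist (c i) (c j).

(* Main.v *)
Require Import Defs.
From Stdlib Require Import Reals.
Open Scope R_scope.
From Stdlib Require Import Lra Psatz Arith Lia.
Import Defs.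


Lemma chord_le_arc (h1 h2 f1 f2 : R) :
  f1 * f1 + h1 * h1 = 1 -> f2 * f2 + h2 * h2 = 1 -> 0 <= f1 -> 0 <= f2 -> h1 <= h2 ->
  (f1 - f2) * (f1 - f2) + (h1 - h2) * (h1 - h2) <= (asin h2 - asin h1) * (asin h2 - asin h1)
  /\ asin h1 <= asin h2.
Proof.
  intros E1 E2 F1 F2 Hh.
  assert (B1 : -1 <= h1 <= 1) by nra.
  assert (B2 : -1 <= h2 <= 1) by nra.
  set (a := asin h1). set (b := asin h2).
  assert (Sa : sin a = h1) by (apply sin_asin; auto).
  assert (Sb : sin b = h2) by (apply sin_asin; auto).
  assert (Ca : cos a = f1).
  { unfold a; rewrite cos_asin by auto.
    replace (1 - h1²) with (f1 * f1) by (unfold Rsqr; lra). apply sqrt_square; auto. }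
  assert (Cb : cos b = f2).
  { unfold b; rewrite cos_asin by auto.
    replace (1 - h2²) with (f2 * f2) by (unfold Rsqr; lra). apply sqrt_square; auto. }
  pose proof (asin_bound h1) as Ba. pose proof (asin_bound h2) as Bb.
  fold a in Ba. fold b in Bb.
  assert (ab : a <= b).
  { apply sin_incr_0; try lra. }
  split; [|exact ab].
  set (d := (b - a) / 2).
  assert (Hd : b = a + 2 * d) by (unfold d; lra).
  assert (key : (f1 - f2) * (f1 - f2) + (h1 - h2) * (h1 - h2) = 4 * (sin d * sin d)).
  { rewrite <- Sa, <- Sb, <- Ca, <- Cb, Hd.
    rewrite cos_plus, sin_plus, cos_2a, sin_2a.
    pose proof (sin2_cos2 a) as P1. pose proof (sin2_cos2 d) as P2. unfold Rsqr in *. nra. }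
  rewrite key.
  assert (d0 : 0 <= d) by (unfold d; lra).
  assert (sd : sin d <= d).
  { destruct (Rle_lt_or_eq_dec 0 d d0) as [H|H].
    - left; apply sin_lt_x; auto.
    - rewrite <- H, sin_0; lra. }
  assert (sd0 : 0 <= sin d).
  { apply sin_ge_0; unfold d; lra. }
  unfold d in *. nra.
Qed.

Lemma step_lemma (u1 u2 s a1 a2 b1 b2 x1 x2 r : R) :
  u1*u1+u2*u2 = 1 -> s*s = 1 -> a1*a1+a2*a2=1 -> b1*b1+b2*b2=1 ->
  0 <= u1*a1+u2*a2 -> 0 <= u1*b1+u2*b2 ->
  s*(u1*a2-u2*a1) <= s*(u1*b2-u2*b1) -> x1*x1+x2*x2 <= r*r -> 0 <= r ->
  x1*(a1-b1)+x2*(a2-b2) <= r * (asin (s*(u1*b2-u2*b1)) - asin (s*(u1*a2-u2*a1))).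
Proof.
  intros U S A B FA FB HH X R0.
  set (fa := u1*a1+u2*a2) in *. set (fb := u1*b1+u2*b2) in *.
  set (ha := s*(u1*a2-u2*a1)) in *. set (hb := s*(u1*b2-u2*b1)) in *.
  assert (Ea : fa*fa+ha*ha = 1).
  { unfold fa, ha. transitivity ((s*s)*((u1*u1+u2*u2)*(a1*a1+a2*a2)) + (1 - s*s)*(u1*a1+u2*a2)*(u1*a1+u2*a2)).
    ring. rewrite S, U, A; ring. }
  assert (Eb : fb*fb+hb*hb = 1).
  { unfold fb, hb. transitivity ((s*s)*((u1*u1+u2*u2)*(b1*b1+b2*b2)) + (1 - s*s)*(u1*b1+u2*b2)*(u1*b1+u2*b2)).
    ring. rewrite S, U, B; ring. }
  destruct (chord_le_arc ha hb fa fb Ea Eb FA FB HH) as [C M].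
  assert (D : (a1-b1)*(a1-b1)+(a2-b2)*(a2-b2) = (fa-fb)*(fa-fb)+(ha-hb)*(ha-hb)).
  { unfold fa, fb, ha, hb.
    transitivity ((u1*u1+u2*u2)*((a1-b1)*(a1-b1)+(a2-b2)*(a2-b2))). rewrite U; ring.
    transitivity ((u1*(a1-b1)+u2*(a2-b2))^2 + (s*s)*(u1*(a2-b2)-u2*(a1-b1))^2). rewrite S; ring. ring. }
  set (t := asin hb - asin ha) in *.
  set (v1 := a1-b1) in *. set (v2 := a2 - b2) in *.
  assert (CS : (x1*v1+x2*v2)*(x1*v1+x2*v2) <= (x1*x1+x2*x2)*(v1*v1+v2*v2)).
  { assert (E : (x1*x1+x2*x2)*(v1*v1+v2*v2) = (x1*v1+x2*v2)*(x1*v1+x2*v2) + (x1*v2-x2*v1)*(x1*v2-x2*v1)) by ring.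
    rewrite E. assert (0 <= (x1*v2-x2*v1)*(x1*v2-x2*v1)) by apply Rle_0_sqr. lra. }
  assert (t0 : 0 <= t) by (unfold t; lra).
  assert (P : (x1*v1+x2*v2)*(x1*v1+x2*v2) <= (r*t)*(r*t)).
  { apply Rle_trans with ((x1*x1+x2*x2)*(v1*v1+v2*v2)); [exact CS|].
    rewrite D. assert (0 <= x1*x1+x2*x2) by nra.
    apply Rle_trans with ((x1*x1+x2*x2)*(t*t)). apply Rmult_le_compat_l; lra.
    assert (0 <= t*t) by nra. nra. }
  assert (0 <= r*t) by nra. nra.
Qed.

Lemma hmono (fa ha fb hb : R) :
  fa*fa+ha*ha = 1 -> fb*fb+hb*hb = 1 -> 0 <= fa -> 0 <= fb -> 0 < fa*hb - ha*fb -> ha <= hb.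
Proof.
  intros Ea Eb Fa Fb C.
  destruct (Rle_or_lt ha hb) as [H|H]; [exact H|exfalso].
  destruct (Rle_or_lt 0 hb) as [P|P].
  - assert (fa <= fb) by nra. nra.
  - destruct (Rle_or_lt 0 ha) as [Q|Q].
    + nra.
    + assert (fb <= fa) by nra. nra.
Qed.

Lemma widen (s x1 x2 y1 y2 z1 z2 : R) :
  0 < y1*y1+y2*y2 ->
  x1*y1+x2*y2 <= 0 -> 0 <= s*(x1*y2-x2*y1) -> 0 <= s*(y1*z2-y2*z1) ->
  0 < s*(x1*z2-x2*z1) -> x1*z1+x2*z2 <= 0.
Proof.
  intros N D C1 C2 C3.
  set (n := y1*y1+y2*y2) in *.
  assert (I1 : n*(x1*z1+x2*z2) = (x1*y1+x2*y2)*(y1*z1+y2*z2) - (x1*y2-x2*y1)*(y1*z2-y2*z1)) by (unfold n; ring).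
  assert (I2 : n*(x1*z2-x2*z1) = (x1*y2-x2*y1)*(y1*z1+y2*z2) + (x1*y1+x2*y2)*(y1*z2-y2*z1)) by (unfold n; ring).
  assert (Hs : 0 <= (x1*y2-x2*y1)*(y1*z2-y2*z1)).
  { destruct (Rle_or_lt 0 s) as [S|S].
    - destruct (Rle_lt_or_eq_dec 0 s S) as [S'|S'].
      + assert (0 <= x1*y2-x2*y1) by (apply (Rmult_le_reg_l s); lra).
        assert (0 <= y1*z2-y2*z1) by (apply (Rmult_le_reg_l s); lra). nra.
      + subst s; lra.
    - assert (x1*y2-x2*y1 <= 0) by nra. assert (y1*z2-y2*z1 <= 0) by nra. nra. }
  destruct (Rle_or_lt 0 (y1*z1+y2*z2)) as [Y|Y].
  - assert (n*(x1*z1+x2*z2) <= 0) by nra. nra.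
  - exfalso.
    assert (s*(n*(x1*z2-x2*z1)) <= 0).
    { rewrite I2. assert (s*(x1*y2-x2*y1)*(y1*z1+y2*z2) <= 0) by nra.
      assert ((x1*y1+x2*y2)*(s*(y1*z2-y2*z1)) <= 0) by nra. nra. }
    nra.
Qed.

Lemma xmono (s a1 a2 p1 p2 q1 q2 b1 b2 : R) :
  0 < s*((p1-a1)*(b2-a2)-(p2-a2)*(b1-a1)) ->
  0 < s*((p1-a1)*(q2-a2)-(p2-a2)*(q1-a1)) ->
  0 < s*((q1-p1)*(b2-p2)-(q2-p2)*(b1-p1)) ->
  (a1-p1)*(b1-p1)+(a2-p2)*(b2-p2) <= 0 ->
  0 <= (q1-p1)*(b1-a1)+(q2-p2)*(b2-a2).
Proof.
  intros H0 H1 H2 D.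
  set (N0 := (p1-a1)*(b2-a2)-(p2-a2)*(b1-a1)) in *.
  set (al := (q1-p1)*(b2-p2)-(q2-p2)*(b1-p1)) in *.
  set (be := (p1-a1)*(q2-a2)-(p2-a2)*(q1-a1)) in *.
  set (X := (q1-p1)*(b1-a1)+(q2-p2)*(b2-a2)).
  assert (I : N0 * X = al*((p1-a1)*(b1-a1)+(p2-a2)*(b2-a2)) + be*((b1-p1)*(b1-a1)+(b2-p2)*(b2-a2)))
    by (unfold N0, X, al, be; ring).
  assert (E1 : 0 <= (p1-a1)*(b1-a1)+(p2-a2)*(b2-a2)).
  { assert (E : (p1-a1)*(b1-a1)+(p2-a2)*(b2-a2) = -((a1-p1)*(b1-p1)+(a2-p2)*(b2-p2)) + ((p1-a1)*(p1-a1)+(p2-a2)*(p2-a2))) by ring.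
    rewrite E. pose proof (Rle_0_sqr (p1-a1)); pose proof (Rle_0_sqr (p2-a2)); unfold Rsqr in *; lra. }
  assert (E2 : 0 <= (b1-p1)*(b1-a1)+(b2-p2)*(b2-a2)).
  { assert (E : (b1-p1)*(b1-a1)+(b2-p2)*(b2-a2) = -((a1-p1)*(b1-p1)+(a2-p2)*(b2-p2)) + ((b1-p1)*(b1-p1)+(b2-p2)*(b2-p2))) by ring.
    rewrite E. pose proof (Rle_0_sqr (b1-p1)); pose proof (Rle_0_sqr (b2-p2)); unfold Rsqr in *; lra. }
  assert (0 <= s*(N0*X)).
  { rewrite I. assert (0 <= (s*al)*((p1-a1)*(b1-a1)+(p2-a2)*(b2-a2))) by nra.
    assert (0 <= (s*be)*((b1-p1)*(b1-a1)+(b2-p2)*(b2-a2))) by nra. nra. }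
  destruct (Rle_or_lt 0 X) as [h|h]; [exact h|exfalso]. nra.
Qed.
Definition nrm (z : point) := sqrt (fst z * fst z + snd z * snd z).
Definition vsub (a b : point) : point := (fst a - fst b, snd a - snd b).
Definition unitv (z : point) : point := (fst z / nrm z, snd z / nrm z).

Lemma unitv_unit z : 0 < fst z * fst z + snd z * snd z ->
  fst (unitv z) * fst (unitv z) + snd (unitv z) * snd (unitv z) = 1.
Proof.
  intros P. unfold unitv, nrm; simpl.
  set (q := fst z * fst z + snd z * snd z) in *.
  assert (Q := sqrt_lt_R0 _ P). pose proof (sqrt_sqrt _ (Rlt_le _ _ P)).
  assert (Qn : sqrt q <> 0) by (apply Rgt_not_eq; exact Q).
  transitivity (q / (sqrt q * sqrt q)). unfold q; field; exact Qn.
  rewrite H; field; apply Rgt_not_eq; exact P.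
Qed.

Lemma dist_unitv a b : 0 < (fst b - fst a) * (fst b - fst a) + (snd b - snd a) * (snd b - snd a) ->
  dist a b = (fst b - fst a) * fst (unitv (vsub b a)) + (snd b - snd a) * snd (unitv (vsub b a)).
Proof.
  intros P. unfold dist.
  replace ((fst a - fst b) ^ 2 + (snd a - snd b) ^ 2) with
    ((fst b - fst a) * (fst b - fst a) + (snd b - snd a) * (snd b - snd a)) by ring.
  unfold unitv, nrm, vsub; simpl.
  set (q := (fst b - fst a) * (fst b - fst a) + (snd b - snd a) * (snd b - snd a)) in *.
  assert (Q := sqrt_lt_R0 _ P). pose proof (sqrt_sqrt _ (Rlt_le _ _ P)).
  assert (Qn : sqrt q <> 0) by (apply Rgt_not_eq; exact Q).
  transitivity (q / sqrt q).
  { rewrite <- H at 2. field; exact Qn. }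
  unfold q; field; exact Qn.
Qed.

Lemma subchain_S c i n :
  subchain_length c i (S n) = subchain_length c i n + dist (c (i + n)%nat) (c (S (i + n))).
Proof.
  revert i; induction n; intros i.
  - simpl. rewrite Nat.add_0_r; lra.
  - change (subchain_length c i (S (S n))) with (dist (c i) (c (S i)) + subchain_length c (S i) (S n)).
    change (subchain_length c i (S n)) with (dist (c i) (c (S i)) + subchain_length c (S i) n).
    rewrite IHn. replace (S i + n)%nat with (i + S n)%nat by lia. lra.
Qed.

Lemma nrm_pos z : 0 < fst z * fst z + snd z * snd z -> 0 < nrm z.
Proof. intros; unfold nrm; apply sqrt_lt_R0; auto. Qed.

Definition Hf (s u1 u2 : R) (w : point) := s * (u1 * snd w - u2 * fst w).
Definition Ff (u1 u2 : R) (w : point) := u1 * fst w + u2 * snd w.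

Lemma unitv_F u1 u2 z : 0 < fst z * fst z + snd z * snd z -> 0 <= Ff u1 u2 z -> 0 <= Ff u1 u2 (unitv z).
Proof.
  intros P F. pose proof (nrm_pos z P). unfold Ff, unitv in *; simpl.
  replace (u1 * (fst z / nrm z) + u2 * (snd z / nrm z)) with ((u1 * fst z + u2 * snd z) / nrm z)
    by (field; lra).
  unfold Rdiv; apply Rmult_le_pos; [lra|]; left; apply Rinv_0_lt_compat; lra.
Qed.

Lemma unitv_cross z w : 0 < fst z * fst z + snd z * snd z -> 0 < fst w * fst w + snd w * snd w ->
  fst (unitv z) * snd (unitv w) - snd (unitv z) * fst (unitv w) =
  (fst z * snd w - snd z * fst w) / (nrm z * nrm w).
Proof.
  intros P Q. pose proof (nrm_pos z P). pose proof (nrm_pos w Q).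
  unfold unitv; simpl. field; lra.
Qed.

Lemma hmono2 s u1 u2 a b : u1*u1+u2*u2 = 1 -> s*s = 1 ->
  fst a * fst a + snd a * snd a = 1 -> fst b * fst b + snd b * snd b = 1 ->
  0 <= Ff u1 u2 a -> 0 <= Ff u1 u2 b ->
  0 < s * (fst a * snd b - snd a * fst b) -> Hf s u1 u2 a <= Hf s u1 u2 b.
Proof.
  intros U S A B Fa Fb C. unfold Ff, Hf in *.
  apply (hmono (u1 * fst a + u2 * snd a) _ (u1 * fst b + u2 * snd b)); auto.
  - transitivity ((s*s)*((u1*u1+u2*u2)*(fst a * fst a + snd a * snd a)) + (1 - s*s)*(u1 * fst a + u2 * snd a)*(u1 * fst a + u2 * snd a)).
    ring. rewrite S, U, A; ring.
  - transitivity ((s*s)*((u1*u1+u2*u2)*(fst b * fst b + snd b * snd b)) + (1 - s*s)*(u1 * fst b + u2 * snd b)*(u1 * fst b + u2 * snd b)).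
    ring. rewrite S, U, B; ring.
  - replace ((u1 * fst a + u2 * snd a) * (s * (u1 * snd b - u2 * fst b)) -
     s * (u1 * snd a - u2 * fst a) * (u1 * fst b + u2 * snd b)) with
     ((u1*u1+u2*u2) * (s * (fst a * snd b - snd a * fst b))) by ring.
    rewrite U; lra.
Qed.

Lemma H_bound s u1 u2 a : u1*u1+u2*u2 = 1 -> s*s = 1 ->
  fst a * fst a + snd a * snd a = 1 -> -1 <= Hf s u1 u2 a <= 1.
Proof.
  intros U S A. unfold Hf.
  assert (E : (u1 * fst a + u2 * snd a)^2 + (s * (u1 * snd a - u2 * fst a))^2 = 1).
  { transitivity ((s*s)*((u1*u1+u2*u2)*(fst a * fst a + snd a * snd a)) + (1 - s*s)*(u1 * fst a + u2 * snd a)*(u1 * fst a + u2 * snd a)).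
    ring. rewrite S, U, A; ring. }
  set (h := s * (u1 * snd a - u2 * fst a)) in *.
  set (f := u1 * fst a + u2 * snd a) in *.
  assert (h * h <= 1) by (pose proof (Rle_0_sqr f); unfold Rsqr in *; simpl in E; lra).
  split; nra.
Qed.

Lemma chain_bound (p : nat -> point) (i j : nat) (u1 u2 s o1 o2 r : R) :
  (i < j)%nat -> u1*u1+u2*u2 = 1 -> s*s = 1 -> 0 <= r ->
  (forall k : nat, (i <= k <= j)%nat ->
     (fst (p k) - o1) * (fst (p k) - o1) + (snd (p k) - o2) * (snd (p k) - o2) <= r * r) ->
  (forall k : nat, (i <= k < j)%nat ->
     0 < fst (vsub (p (S k)) (p k)) * fst (vsub (p (S k)) (p k)) + snd (vsub (p (S k)) (p k)) * snd (vsub (p (S k)) (p k))) ->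
  (forall k : nat, (i <= k < j)%nat -> 0 <= Ff u1 u2 (vsub (p (S k)) (p k))) ->
  (forall k : nat, (i < k < j)%nat ->
     0 < s * (fst (vsub (p k) (p (k-1)%nat)) * snd (vsub (p (S k)) (p k)) - snd (vsub (p k) (p (k-1)%nat)) * fst (vsub (p (S k)) (p k)))) ->
  fst (p i) - o1 = - r * u1 -> snd (p i) - o2 = - r * u2 ->
  fst (p j) - o1 = r * u1 -> snd (p j) - o2 = r * u2 ->
  subchain_length p i (j - i) <= r * PI.
Proof.
  intros Hij U SS R0 Hdisk Hne HF Hcr Ai1 Ai2 Aj1 Aj2.
  set (Ws := (s*u2, -(s*u1))).
  set (win := fun k => if Nat.eqb k i then Ws else unitv (vsub (p k) (p (k-1)%nat))).
  set (X := fun (k : nat) (w : point) => (fst (p k) - o1) * fst w + (snd (p k) - o2) * snd w).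
  assert (Wunit : forall k : nat, (i <= k <= j)%nat -> fst (win k) * fst (win k) + snd (win k) * snd (win k) = 1
            /\ 0 <= Ff u1 u2 (win k)).
  { intros k Hk. unfold win. destruct (Nat.eqb_spec k i).
    - unfold Ws, Ff; simpl. split.
      + replace (s * u2 * (s * u2) + - (s * u1) * - (s * u1)) with ((s*s)*(u1*u1+u2*u2)) by ring.
        rewrite SS, U; ring.
      + right; ring.
    - assert (Hk' : (i <= k - 1 < j)%nat) by lia.
      assert (E : vsub (p k) (p (k - 1)%nat) = vsub (p (S (k - 1))) (p (k - 1)%nat))
        by (do 2 f_equal; lia).
      rewrite E. split.
      + apply unitv_unit. apply Hne; auto.
      + apply unitv_F. apply Hne; auto. apply HF; auto. }
  assert (Step : forall k : nat, (i <= k < j)%nat ->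
     X k (win k) + dist (p k) (p (S k)) - X (S k) (win (S k)) <=
     r * (asin (Hf s u1 u2 (win (S k))) - asin (Hf s u1 u2 (win k)))).
  { intros k Hk.
    destruct (Wunit k ltac:(lia)) as [Ua Fa].
    destruct (Wunit (S k) ltac:(lia)) as [Ub Fb].
    assert (WS : win (S k) = unitv (vsub (p (S k)) (p k))).
    { unfold win. destruct (Nat.eqb_spec (S k) i); [lia|]. replace (S k - 1)%nat with k by lia. reflexivity. }
    assert (Hmon : Hf s u1 u2 (win k) <= Hf s u1 u2 (win (S k))).
    { destruct (Nat.eqb_spec k i) as [e|e].
      - assert (Hwi : Hf s u1 u2 (win k) = -1).
        { unfold win; rewrite e, Nat.eqb_refl. unfold Hf, Ws; simpl.
          replace (s * (u1 * - (s * u1) - u2 * (s * u2))) with (-((s*s)*(u1*u1+u2*u2))) by ring.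
          rewrite SS, U; ring. }
        rewrite Hwi. destruct (H_bound s u1 u2 (win (S k)) U SS Ub); lra.
      - apply hmono2; auto.
        assert (WK : win k = unitv (vsub (p k) (p (k - 1)%nat))).
        { unfold win. destruct (Nat.eqb_spec k i); [lia|]. reflexivity. }
        rewrite WK, WS, unitv_cross.
        + assert (P1 : 0 < fst (vsub (p k) (p (k - 1)%nat)) * fst (vsub (p k) (p (k - 1)%nat)) + snd (vsub (p k) (p (k - 1)%nat)) * snd (vsub (p k) (p (k - 1)%nat))).
          { assert (E : vsub (p k) (p (k - 1)%nat) = vsub (p (S (k - 1))) (p (k - 1)%nat))
              by (do 2 f_equal; lia). rewrite E. apply Hne; lia. }
          pose proof (nrm_pos _ P1). pose proof (nrm_pos _ (Hne k Hk)).
          unfold Rdiv. rewrite <- Rmult_assoc. apply Rmult_lt_0_compat.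
          * apply Hcr; lia.
          * apply Rinv_0_lt_compat, Rmult_lt_0_compat; auto.
        + assert (E : vsub (p k) (p (k - 1)%nat) = vsub (p (S (k - 1))) (p (k - 1)%nat))
            by (do 2 f_equal; lia). rewrite E. apply Hne; lia.
        + apply Hne; lia. }
    pose proof (step_lemma u1 u2 s (fst (win k)) (snd (win k)) (fst (win (S k))) (snd (win (S k)))
       (fst (p k) - o1) (snd (p k) - o2) r U SS Ua Ub Fa Fb Hmon (Hdisk k ltac:(lia)) R0) as SL.
    unfold Hf in *.
    rewrite (dist_unitv (p k) (p (S k))).
    2:{ apply (Hne k Hk). }
    rewrite <- WS. unfold X. lra. }
  assert (Inv : forall n, (i + n <= j)%nat ->
     subchain_length p i n <= r * (asin (Hf s u1 u2 (win (i + n)%nat)) + PI / 2) + X (i + n)%nat (win (i + n)%nat)).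
  { induction n as [|n IH]; intros Hn.
    - rewrite Nat.add_0_r. simpl.
      assert (Hwi : win i = Ws) by (unfold win; rewrite Nat.eqb_refl; reflexivity).
      rewrite Hwi. unfold Hf, X, Ws; simpl.
      replace (s * (u1 * - (s * u1) - u2 * (s * u2))) with (-((s*s)*(u1*u1+u2*u2))) by ring.
      rewrite SS, U, Ai1, Ai2.
      replace (- (1 * 1)) with (- (1)) by ring. rewrite asin_opp, asin_1.
      replace ((- r * u1) * (s * u2) + (- r * u2) * - (s * u1)) with 0 by ring. lra.
    - rewrite subchain_S. specialize (IH ltac:(lia)).
      pose proof (Step (i + n)%nat ltac:(lia)) as St.
      replace (i + S n)%nat with (S (i + n)) by lia. lra. }
  pose proof (Inv (j - i)%nat ltac:(lia)) as Fin.
  replace (i + (j - i))%nat with j in Fin by lia.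
  destruct (Wunit j ltac:(lia)) as [Uj Fj].
  set (We := (-(s*u2), s*u1)).
  assert (UWe : fst We * fst We + snd We * snd We = 1).
  { unfold We; simpl. replace (- (s * u2) * - (s * u2) + s * u1 * (s * u1)) with ((s*s)*(u1*u1+u2*u2)) by ring.
    rewrite SS, U; ring. }
  assert (FWe : 0 <= Ff u1 u2 We) by (unfold We, Ff; simpl; right; ring).
  assert (HWe : Hf s u1 u2 We = 1).
  { unfold Hf, We; simpl. replace (s * (u1 * (s * u1) - u2 * - (s * u2))) with ((s*s)*(u1*u1+u2*u2)) by ring.
    rewrite SS, U; ring. }
  assert (Hm : Hf s u1 u2 (win j) <= Hf s u1 u2 We).
  { rewrite HWe. destruct (H_bound s u1 u2 (win j) U SS Uj); lra. }
  pose proof (step_lemma u1 u2 s (fst (win j)) (snd (win j)) (fst We) (snd We)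
       (fst (p j) - o1) (snd (p j) - o2) r U SS Uj UWe Fj FWe Hm (Hdisk j ltac:(lia)) R0) as SL.
  unfold Hf in HWe. rewrite HWe, asin_1 in SL.
  unfold X in Fin. unfold Hf in Fin.
  rewrite Aj1, Aj2 in SL, Fin. unfold We in SL; simpl in SL.
  replace (r * u1 * (fst (win j) - - (s * u2)) + r * u2 * (snd (win j) - s * u1)) with
    (r * u1 * fst (win j) + r * u2 * snd (win j)) in SL by ring.
  lra.
Qed.

Lemma disk_dot p q x : in_diam_disk p q x ->
  (fst p - fst x) * (fst q - fst x) + (snd p - snd x) * (snd q - snd x) <= 0.
Proof.
  unfold in_diam_disk, dist. intros H. cbn [fst snd] in H.
  set (a := (fst x - (fst p + fst q) / 2) ^ 2 + (snd x - (snd p + snd q) / 2) ^ 2) in *.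
  set (b := (fst p - fst q) ^ 2 + (snd p - snd q) ^ 2) in *.
  assert (a0 : 0 <= a) by (unfold a; apply Rplus_le_le_0_compat; apply pow2_ge_0).
  assert (b0 : 0 <= b) by (unfold b; apply Rplus_le_le_0_compat; apply pow2_ge_0).
  pose proof (sqrt_pos a). pose proof (sqrt_pos b).
  pose proof (sqrt_sqrt a a0). pose proof (sqrt_sqrt b b0).
  assert (sqrt a * sqrt a <= (sqrt b / 2) * (sqrt b / 2)) by (apply Rmult_le_compat; lra).
  assert (a <= b / 4) by lra.
  unfold a, b in *. simpl in *. lra.
Qed.

Lemma orient_cyc a b c : orient a b c = orient b c a.
Proof. unfold orient; ring. Qed.

Lemma orient_deg12 a b c : 0 >= (fst b - fst a) * (fst b - fst a) + (snd b - snd a) * (snd b - snd a) -> orient a b c = 0.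
Proof.
  intros H. pose proof (Rle_0_sqr (fst b - fst a)). pose proof (Rle_0_sqr (snd b - snd a)).
  unfold Rsqr in *.
  assert (E1 : (fst b - fst a) * (fst b - fst a) = 0) by lra.
  assert (E2 : (snd b - snd a) * (snd b - snd a) = 0) by lra.
  apply Rmult_integral in E1. apply Rmult_integral in E2.
  assert (K0 : fst b - fst a = 0) by (destruct E1; auto).
  assert (K1 : snd b - snd a = 0) by (destruct E2; auto).
  unfold orient. rewrite K0, K1; ring.
Qed.

Lemma nondeg s a b c : 0 < s * orient a b c ->
  0 < (fst b - fst a) * (fst b - fst a) + (snd b - snd a) * (snd b - snd a) /\
  0 < (fst c - fst b) * (fst c - fst b) + (snd c - snd b) * (snd c - snd b) /\
  0 < (fst c - fst a) * (fst c - fst a) + (snd c - snd a) * (snd c - snd a).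
Proof.
  intros H. repeat split.
  - destruct (Rlt_or_le 0 ((fst b - fst a) * (fst b - fst a) + (snd b - snd a) * (snd b - snd a))) as [h|h]; auto.
    rewrite (orient_deg12 a b c) in H by lra. lra.
  - destruct (Rlt_or_le 0 ((fst c - fst b) * (fst c - fst b) + (snd c - snd b) * (snd c - snd b))) as [h|h]; auto.
    rewrite orient_cyc, (orient_deg12 b c a) in H by lra. lra.
  - destruct (Rlt_or_le 0 ((fst c - fst a) * (fst c - fst a) + (snd c - snd a) * (snd c - snd a))) as [h|h]; auto.
    rewrite orient_cyc, orient_cyc, (orient_deg12 c a b) in H by lra. lra.
Qed.

Theorem theorem6 (c : nat -> point) (m : nat) :
  convex_chain c m ->
  chain_in_diam_disk c m ->
  stretch_at_most c m (PI / 2).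
Proof.
  intros Hconv Hdisk i j Hij Hjm.
  assert (Dpos : forall a b, 0 <= dist a b) by (intros; unfold dist; apply sqrt_pos).
  pose proof PI_RGT_0 as Ppos.
  assert (Pgt : 2 < PI) by (pose proof PI2_1; lra).
  destruct (Nat.eq_dec j i) as [e|ne].
  { subst j. rewrite Nat.sub_diag. simpl. pose proof (Dpos (c i) (c i)). nra. }
  destruct (Nat.eq_dec j (S i)) as [e|ne2].
  { subst j. replace (S i - i)%nat with 1%nat by lia. simpl.
    pose proof (Dpos (c i) (c (S i))). nra. }
  assert (Hs : exists s, s * s = 1 /\ forall x y z, (x < y)%nat -> (y < z)%nat -> (z < m)%nat ->
             0 < s * orient (c x) (c y) (c z)).
  { destruct Hconv as [H|H].
    - exists 1. split; [ring|]. intros x y z a b d. specialize (H x y z a b d). lra.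
    - exists (-1). split; [ring|]. intros x y z a b d. specialize (H x y z a b d). lra. }
  destruct Hs as [s [SS Hs]].
  assert (Hv : forall k, (k < m)%nat ->
     (fst (c 0%nat) - fst (c k)) * (fst (c (m-1)%nat) - fst (c k)) +
     (snd (c 0%nat) - snd (c k)) * (snd (c (m-1)%nat) - snd (c k)) <= 0).
  { intros k Hk. destruct (Nat.eq_dec k (m-1)) as [e|e].
    - rewrite e. right; ring.
    - pose proof (Hdisk k 0 ltac:(lia) ltac:(lra)) as D.
      apply disk_dot in D. unfold seg_point in D; simpl in D.
      replace ((1 - 0) * fst (c k) + 0 * fst (c (S k))) with (fst (c k)) in D by ring.
      replace ((1 - 0) * snd (c k) + 0 * snd (c (S k))) with (snd (c k)) in D by ring.
      exact D. }
  assert (Hv2 : forall k, (i <= k <= j)%nat ->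
     (fst (c i) - fst (c k)) * (fst (c j) - fst (c k)) +
     (snd (c i) - snd (c k)) * (snd (c j) - snd (c k)) <= 0).
  { intros k Hk. destruct (Nat.eq_dec k i) as [e|e].
    { rewrite e. right; ring. }
    destruct (Nat.eq_dec k j) as [e'|e'].
    { rewrite e'. right; ring. }
    assert (Hkm : (0 < k < m - 1)%nat) by lia.
    pose proof (Hv k ltac:(lia)) as V.
    assert (O1 : 0 < s * orient (c 0%nat) (c k) (c (m-1)%nat)) by (apply Hs; lia).
    assert (O2 : 0 <= s * orient (c 0%nat) (c i) (c k)).
    { destruct (Nat.eq_dec i 0) as [e0|e0].
      - rewrite e0. unfold orient. right; ring.
      - left; apply Hs; lia. }
    assert (O3 : 0 < s * orient (c i) (c k) (c (m-1)%nat)) by (apply Hs; lia).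
    assert (O4 : 0 <= s * orient (c k) (c j) (c (m-1)%nat)).
    { destruct (Nat.eq_dec j (m-1)) as [e0|e0].
      - rewrite e0. unfold orient. right; ring.
      - left; apply Hs; lia. }
    assert (O5 : 0 < s * orient (c i) (c k) (c j)) by (apply Hs; lia).
    set (d1 := fst (c (m-1)%nat) - fst (c k)). set (d2 := snd (c (m-1)%nat) - snd (c k)).
    set (a1 := fst (c 0%nat) - fst (c k)). set (a2 := snd (c 0%nat) - snd (c k)).
    set (b1 := fst (c i) - fst (c k)). set (b2 := snd (c i) - snd (c k)).
    set (e1 := fst (c j) - fst (c k)). set (e2 := snd (c j) - snd (c k)).
    unfold orient in *.
    assert (W1 : d1 * b1 + d2 * b2 <= 0).
    { apply (widen s d1 d2 a1 a2 b1 b2).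
      - destruct (Rlt_or_le 0 (a1*a1+a2*a2)) as [h|h]; auto.
        assert (a1 * a1 = 0) by (pose proof (Rle_0_sqr a1); pose proof (Rle_0_sqr a2); unfold Rsqr in *; lra).
        assert (a2 * a2 = 0) by (pose proof (Rle_0_sqr a1); pose proof (Rle_0_sqr a2); unfold Rsqr in *; lra).
        assert (a1 = 0) by (destruct (Rmult_integral _ _ H); auto).
        assert (a2 = 0) by (destruct (Rmult_integral _ _ H0); auto).
        exfalso. unfold a1, a2 in *.
        assert (fst (c 0%nat) = fst (c k)) by lra. assert (snd (c 0%nat) = snd (c k)) by lra.
        rewrite H3, H4 in O1. lra.
      - unfold d1, d2, a1, a2. lra.
      - unfold d1, d2, a1, a2. lra.
      - unfold a1, a2, b1, b2. lra.
      - unfold d1, d2, b1, b2. lra. }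
    apply (widen (-s) b1 b2 d1 d2 e1 e2).
    - destruct (Rlt_or_le 0 (d1*d1+d2*d2)) as [h|h]; auto.
      assert (d1 * d1 = 0) by (pose proof (Rle_0_sqr d1); pose proof (Rle_0_sqr d2); unfold Rsqr in *; lra).
      assert (d2 * d2 = 0) by (pose proof (Rle_0_sqr d1); pose proof (Rle_0_sqr d2); unfold Rsqr in *; lra).
      assert (d1 = 0) by (destruct (Rmult_integral _ _ H); auto).
      assert (d2 = 0) by (destruct (Rmult_integral _ _ H0); auto).
      exfalso. unfold d1, d2 in *.
      assert (fst (c (m-1)%nat) = fst (c k)) by lra. assert (snd (c (m-1)%nat) = snd (c k)) by lra.
      rewrite H3, H4 in O3. lra.
    - lra.
    - unfold d1, d2, b1, b2. lra.
    - unfold d1, d2, e1, e2. lra.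
    - unfold b1, b2, e1, e2. lra. }
  assert (Nd : 0 < (fst (c j) - fst (c i)) * (fst (c j) - fst (c i)) + (snd (c j) - snd (c i)) * (snd (c j) - snd (c i))).
  { destruct (nondeg s (c i) (c (S i)) (c j) ltac:(apply Hs; lia)) as [_ [_ h]]. exact h. }
  set (N := (fst (c j) - fst (c i)) * (fst (c j) - fst (c i)) + (snd (c j) - snd (c i)) * (snd (c j) - snd (c i))) in *.
  assert (DE : dist (c i) (c j) = sqrt N).
  { unfold dist, N. f_equal. ring. }
  set (D := dist (c i) (c j)) in *.
  assert (Dp : 0 < D) by (rewrite DE; apply sqrt_lt_R0; auto).
  assert (DD : D * D = N) by (rewrite DE; apply sqrt_sqrt; lra).
  assert (Dn : D <> 0) by (apply Rgt_not_eq; exact Dp).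
  assert (NE : N = (fst (c j) - fst (c i)) * (fst (c j) - fst (c i)) + (snd (c j) - snd (c i)) * (snd (c j) - snd (c i))) by reflexivity.
  clearbody D N.
  replace (PI / 2 * D) with (D / 2 * PI) by field.
  apply (chain_bound c i j ((fst (c j) - fst (c i)) / D) ((snd (c j) - snd (c i)) / D) s
           ((fst (c i) + fst (c j)) / 2) ((snd (c i) + snd (c j)) / 2) (D / 2)).
  - lia.
  - transitivity (N / (D * D)). rewrite NE; field; exact Dn. rewrite DD; field; lra.
  - exact SS.
  - lra.
  - intros k Hk. pose proof (Hv2 k Hk) as V.
    replace (D / 2 * (D / 2)) with (N / 4) by (rewrite <- DD; field).
    rewrite NE. lra.
  - intros k Hk. unfold vsub; simpl. destruct (Nat.eq_dec (S k) j) as [e|e].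
    + destruct (nondeg s (c i) (c k) (c (S k)) ltac:(apply Hs; lia)) as [_ [h _]]. exact h.
    + destruct (nondeg s (c k) (c (S k)) (c j) ltac:(apply Hs; lia)) as [h _]. exact h.
  - intros k Hk. unfold Ff, vsub; simpl.
    replace ((fst (c j) - fst (c i)) / D * (fst (c (S k)) - fst (c k)) + (snd (c j) - snd (c i)) / D * (snd (c (S k)) - snd (c k)))
      with (((fst (c (S k)) - fst (c k)) * (fst (c j) - fst (c i)) + (snd (c (S k)) - snd (c k)) * (snd (c j) - snd (c i))) / D)
      by (field; exact Dn).
    unfold Rdiv. apply Rmult_le_pos; [|left; apply Rinv_0_lt_compat; exact Dp].
    destruct (Nat.eq_dec k i) as [e|e].
    + subst k. pose proof (Hv2 (S i) ltac:(lia)) as V.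
      pose proof (Rle_0_sqr (fst (c (S i)) - fst (c i))). pose proof (Rle_0_sqr (snd (c (S i)) - snd (c i))).
      unfold Rsqr in *. lra.
    + destruct (Nat.eq_dec (S k) j) as [e'|e'].
      * rewrite <- e'. pose proof (Hv2 k ltac:(lia)) as V. rewrite <- e' in V.
        pose proof (Rle_0_sqr (fst (c (S k)) - fst (c k))). pose proof (Rle_0_sqr (snd (c (S k)) - snd (c k))).
        unfold Rsqr in *. lra.
      * pose proof (Hv2 k ltac:(lia)) as V.
        pose proof (Hs i k j ltac:(lia) ltac:(lia) ltac:(lia)) as O1.
        pose proof (Hs i k (S k) ltac:(lia) ltac:(lia) ltac:(lia)) as O2.
        pose proof (Hs k (S k) j ltac:(lia) ltac:(lia) ltac:(lia)) as O3.
        unfold orient in *.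
        apply (xmono s (fst (c i)) (snd (c i)) (fst (c k)) (snd (c k)) (fst (c (S k))) (snd (c (S k))) (fst (c j)) (snd (c j))); auto.
  - intros k Hk. unfold vsub; simpl.
    pose proof (Hs (k-1)%nat k (S k) ltac:(lia) ltac:(lia) ltac:(lia)) as O.
    unfold orient in O. lra.
  - field. exact Dn.
  - field. exact Dn.
  - field. exact Dn.
  - field. exact Dn.
Qed.
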